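(* Let $Q$ be a planar surface and let $U\in\mathrm{PC}(Q)$ be open in $Q$. Let $\mathcal I(U)=\{P\in\tilde{\mathcal M}:U\rightsquigarrow P\}$ (a closed subset of $\tilde{\mathcal M}$), and for $P\in\mathcal I(U)$ let $\iota_P:U\rightsquigarrow P$ be the (unique) immersion. Then the map $I_U:\mathcal I(U)\times U\to\tilde{\mathcal E}$, $I_U(P,q)=(P,\iota_P(q))$, is continuous, where $\mathcal I(U)$ carries the subspace topology from the immersive topology on $\tilde{\mathcal M}$ and $U$ the subspace topology from $Q$.
   Context: Let $\Delta$ be the open oriented topological $2$-disk with basepoint $x_0$. A pointed local homeomorphism is an orientation-preserving local homeomorphism $\phi:\Delta\to\mathbb R^2$ with $\phi(x_0)=\mathbf 0$. Two such maps $\phi,\psi$ are isomorphic if $\psi=\phi\circ h^{-1}$ for some orientation-preserving homeomorphism $h$ of $\Delta$ fixing $x_0$. The moduli space $\tilde{\mathcal M}$ is the set of isomorphism classes; an element $P\in\tilde{\mathcal M}$ is a planar surface, regarded as a topological open disk with basepoint $o_P$ and developing map $\mathrm{dev}_P:P\to\mathbb R^2$, an orientation-preserving local homeomorphism with $\mathrm{dev}_P(o_P)=\mathbf 0$. The set $\tilde{\mathcal E}$ is the set of pairs $(P,p)$ with $P$ a planar surface and $p\in P$; $\tilde\pi(P,p)=P$. $\mathrm{PC}(P)$ is the set of path-connected subsets of $P$ containing $o_P$. For $A\in\mathrm{PC}(P)$, $B\in\mathrm{PC}(Q)$, an immersion $\iota:A\rightsquigarrow B$ is a continuous map with $\iota(o_P)=o_Q$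 and $\mathrm{dev}_Q\circ\iota=\mathrm{dev}_P$ on $A$; it is unique if it exists. An embedding is an injective immersion ($\hookrightarrow$). $\overline{\mathrm{Disk}}(P)$: elements of $\mathrm{PC}(P)$ homeomorphic to a closed $2$-disk with $o_P$ in their interior; $\mathrm{Disk}(P)$: elements of $\mathrm{PC}(P)$ homeomorphic to an open $2$-disk. The immersive topology on $\tilde{\mathcal M}$ is the coarsest topology in which $\{Q:K\rightsquigarrow Q\}$ is open for every $K\in\overline{\mathrm{Disk}}(P)$ and $\{Q:U\not\hookrightarrow Q\}$ is open for every $U\in\mathrm{Disk}(P)$, over all planar surfaces $P$. For compact $K\in\mathrm{PC}(P)$ and open $U\subset K^\circ$, $\tilde{\mathcal E}_+(K,U)=\{(Q,q):\exists\,\iota:K\rightsquigarrow Q,\ q\in\iota(U)\}$. The immersive topology on $\tilde{\mathcal E}$ is the coarsest topology making $\tilde\pi$ continuous and every $\tilde{\mathcal E}_+(K,U)$ open. *)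

(* Defs.v *)
From Stdlib Require Import Reals Lra List.
Open Scope R_scope.

Definition R2 : Type := (R * R)%type.
Definition orig : R2 := (0, 0).
Definition dist2 (p q : R2) : R :=
  sqrt ((fst p - fst q) ^ 2 + (snd p - snd q) ^ 2).

Definition open2 (V : R2 -> Prop) : Prop :=
  forall x, V x -> exists r, 0 < r /\ forall y, dist2 x y < r -> V y.

Definition interior2 (K : R2 -> Prop) (x : R2) : Prop :=
  exists r, 0 < r /\ forall y, dist2 x y < r -> K y.

Definition cont_on (A : R2 -> Prop) (f : R2 -> R2) : Prop :=
  forall x, A x -> forall eps, 0 < eps -> exists del, 0 < del /\
    forall y, A y -> dist2 x y < del -> dist2 (f x) (f y) < eps.

Definition unit01 (t : R) : Prop := 0 <= t <= 1.

Definition path_cont (g : R -> R2) : Prop :=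
  forall t, unit01 t -> forall eps, 0 < eps -> exists del, 0 < del /\
    forall s, unit01 s -> Rabs (t - s) < del -> dist2 (g t) (g s) < eps.

Definition rfun_cont01 (th : R -> R) : Prop :=
  forall t, unit01 t -> forall eps, 0 < eps -> exists del, 0 < del /\
    forall s, unit01 s -> Rabs (t - s) < del -> Rabs (th t - th s) < eps.

Definition compact2 (K : R2 -> Prop) : Prop :=
  forall C : (R2 -> Prop) -> Prop,
    (forall V, C V -> open2 V) ->
    (forall x, K x -> exists V, C V /\ V x) ->
    exists l : list (R2 -> Prop), Forall C l /\
      forall x, K x -> Exists (fun V => V x) l.

(** Orientation: winding number via a continuous angle lift. *)
Definition angle_lift (g : R -> R2) (c : R2) (th : R -> R) : Prop :=
  rfun_cont01 th /\
  forall t, unit01 t -> g t <> c /\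
    fst (g t) - fst c = dist2 (g t) c * cos (th t) /\
    snd (g t) - snd c = dist2 (g t) c * sin (th t).

Definition circ (x : R2) (eps t : R) : R2 :=
  (fst x + eps * cos (2 * PI * t), snd x + eps * sin (2 * PI * t)).

(** f has local degree +1 at every point: small counterclockwise circles
    around x are mapped to loops winding once counterclockwise around f x. *)
Definition orientation_preserving (f : R2 -> R2) : Prop :=
  forall x, exists r, 0 < r /\ forall eps, 0 < eps < r ->
    exists th, angle_lift (fun t => f (circ x eps t)) (f x) th /\
               th 1 - th 0 = 2 * PI.

Definition local_homeo (f : R2 -> R2) : Prop :=
  cont_on (fun _ => True) f /\
  forall x, exists (V W : R2 -> Prop) (g : R2 -> R2),
    V x /\ open2 V /\ open2 W /\
    (forall y, V y -> W (f y) /\ g (f y) = y) /\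
    (forall z, W z -> V (g z) /\ f (g z) = z) /\
    cont_on W g.

(** The disk Delta is modelled by R^2 (with its standard orientation),
    basepoint x0 = origin.  A planar surface is represented by a pointed
    orientation-preserving local homeomorphism (its developing map). *)
Definition planar (phi : R2 -> R2) : Prop :=
  local_homeo phi /\ orientation_preserving phi /\ phi orig = orig.

Definition PS : Type := { phi : R2 -> R2 | planar phi }.
Definition dev (P : PS) : R2 -> R2 := proj1_sig P.

Definition PC (A : R2 -> Prop) : Prop :=
  A orig /\
  forall x y, A x -> A y -> exists g : R -> R2,
    path_cont g /\ (forall t, unit01 t -> A (g t)) /\ g 0 = x /\ g 1 = y.

Definition closed_unit_disk (x : R2) : Prop := dist2 x orig <= 1.
Definition open_unit_disk (x : R2) : Prop := dist2 x orig < 1.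

Definition homeomorphic (D A : R2 -> Prop) : Prop :=
  exists f g : R2 -> R2,
    (forall x, D x -> A (f x) /\ g (f x) = x) /\
    (forall y, A y -> D (g y) /\ f (g y) = y) /\
    cont_on D f /\ cont_on A g.

Definition cdisk (K : R2 -> Prop) : Prop :=
  PC K /\ homeomorphic closed_unit_disk K /\ interior2 K orig.
Definition odisk (U : R2 -> Prop) : Prop :=
  PC U /\ homeomorphic open_unit_disk U.

Definition immersion (P : PS) (A : R2 -> Prop) (Q : PS) (B : R2 -> Prop)
  (iota : R2 -> R2) : Prop :=
  (forall x, A x -> B (iota x)) /\ cont_on A iota /\ iota orig = orig /\
  (forall x, A x -> dev Q (iota x) = dev P x).

Definition allQ (_ : R2) : Prop := True.

Definition immerses (P : PS) (A : R2 -> Prop) (Q : PS) : Prop :=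
  exists iota, immersion P A Q allQ iota.

Definition embeds (P : PS) (A : R2 -> Prop) (Q : PS) : Prop :=
  exists iota, immersion P A Q allQ iota /\
    (forall x y, A x -> A y -> iota x = iota y -> x = y).

(** coarsest topology containing a subbasis S: open sets are those that
    contain, around each of their points, a finite intersection of
    subbasic sets *)
Definition gen_open {X : Type} (S : (X -> Prop) -> Prop) (W : X -> Prop) : Prop :=
  forall x, W x -> exists l : list (X -> Prop),
    Forall S l /\ Forall (fun V => V x) l /\
    forall y, Forall (fun V => V y) l -> W y.

Definition subbasisM (W : PS -> Prop) : Prop :=
  (exists (P0 : PS) (K : R2 -> Prop), cdisk K /\
     forall P, W P <-> immerses P0 K P) \/
  (exists (P0 : PS) (U : R2 -> Prop), odisk U /\
     forall P, W P <-> ~ embeds P0 U P).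

Definition openM : (PS -> Prop) -> Prop := gen_open subbasisM.

Definition Eplus (P0 : PS) (K U : R2 -> Prop) (z : PS * R2) : Prop :=
  exists iota, immersion P0 K (fst z) allQ iota /\
    exists u, U u /\ iota u = snd z.

Definition subbasisE (W : PS * R2 -> Prop) : Prop :=
  (exists V, openM V /\ forall z, W z <-> V (fst z)) \/
  (exists (P0 : PS) (K U : R2 -> Prop),
     PC K /\ compact2 K /\ open2 U /\ (forall x, U x -> interior2 K x) /\
     forall z, W z <-> Eplus P0 K U z).

Definition openE : (PS * R2 -> Prop) -> Prop := gen_open subbasisE.

Definition Iset (Q : PS) (U : R2 -> Prop) (P : PS) : Prop := immerses Q U P.

(* Main.v *)
Require Import Defs.
From Stdlib Require Import Reals Lra List Classical.
Open Scope R_scope.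

Lemma dist2_ge0 x y : 0 <= dist2 x y.
Proof. unfold dist2; apply sqrt_pos. Qed.

Lemma dist2_sym x y : dist2 x y = dist2 y x.
Proof. unfold dist2; f_equal; ring. Qed.

Lemma dist2_refl x : dist2 x x = 0.
Proof. unfold dist2. replace ((fst x - fst x) ^ 2 + (snd x - snd x) ^ 2) with 0 by ring.
  apply sqrt_0. Qed.

Lemma dist2_eq0 x y : dist2 x y = 0 -> x = y.
Proof. unfold dist2; intro H.
  destruct x as [a b], y as [c d]; simpl in *.
  pose proof (pow2_ge_0 (a-c)). pose proof (pow2_ge_0 (b-d)).
  apply sqrt_eq_0 in H; [|lra].
  assert (K1 : (a-c)^2 = 0) by lra. assert (K2 : (b-d)^2 = 0) by lra.
  rewrite <- Rsqr_pow2 in K1, K2. apply Rsqr_0_uniq in K1. apply Rsqr_0_uniq in K2.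
  assert (a = c) by lra. assert (b = d) by lra. subst; reflexivity. Qed.

Lemma cs_aux a b c d sa sc : 0 <= sa -> 0 <= sc -> sa*sa = a*a+b*b -> sc*sc = c*c+d*d ->
  a*c+b*d <= sa*sc.
Proof. intros. assert (E : (sa*sc)*(sa*sc) = (a*c+b*d)*(a*c+b*d) + (a*d-b*c)*(a*d-b*c))
  by (replace ((sa*sc)*(sa*sc)) with ((sa*sa)*(sc*sc)) by ring; rewrite H1, H2; ring).
  assert (0 <= sa*sc) by nra.
  destruct (Rle_dec (a*c+b*d) 0). lra.
  assert (0 <= (a*d-b*c)*(a*d-b*c)) by apply Rle_0_sqr.
  set (x := a*c+b*d) in *. set (y := sa*sc) in *.
  destruct (Rle_dec x y) as [|Hn]; [lra|].
  assert (x*x > y*y). { apply Rnot_le_lt in Hn. assert (0 < x - y) by lra.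
    assert (0 < (x-y)*(x+y)) by (apply Rmult_lt_0_compat; lra). nra. }
  lra. Qed.

Lemma dist2_tri x y z : dist2 x z <= dist2 x y + dist2 y z.
Proof.
  unfold dist2.
  set (a := fst x - fst y); set (b := snd x - snd y);
  set (c := fst y - fst z); set (d := snd y - snd z).
  replace (fst x - fst z) with (a + c) by (unfold a, c; ring).
  replace (snd x - snd z) with (b + d) by (unfold b, d; ring).
  set (sa := sqrt (a^2+b^2)); set (sc := sqrt (c^2+d^2)).
  assert (Ha : 0 <= sa) by apply sqrt_pos.
  assert (Hc : 0 <= sc) by apply sqrt_pos.
  assert (Ha2 : sa*sa = a*a+b*b) by (unfold sa; rewrite sqrt_sqrt; nra).
  assert (Hc2 : sc*sc = c*c+d*d) by (unfold sc; rewrite sqrt_sqrt; nra).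
  assert (HH := cs_aux a b c d sa sc Ha Hc Ha2 Hc2).
  rewrite <- (sqrt_square (sa + sc)) by lra.
  apply sqrt_le_1_alt. nra.
Qed.

Lemma dist2_diff a b c : Rabs (dist2 a c - dist2 b c) <= dist2 a b.
Proof.
  pose proof (dist2_tri a b c). pose proof (dist2_tri b a c).
  rewrite (dist2_sym b a) in H0. unfold Rabs; destruct Rcase_abs; lra.
Qed.

Definition lin (x y : R2) (t : R) : R2 :=
  (fst x + t * (fst y - fst x), snd x + t * (snd y - snd x)).

Lemma dist2_lin x y t s : dist2 (lin x y t) (lin x y s) = Rabs (t - s) * dist2 x y.
Proof.
  unfold dist2, lin; simpl.
  rewrite <- sqrt_Rsqr_abs, <- sqrt_mult_alt by apply Rle_0_sqr. f_equal. unfold Rsqr; ring.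
Qed.

Lemma lin0 x y : lin x y 0 = x.
Proof. unfold lin; destruct x; simpl; f_equal; ring. Qed.
Lemma lin1 x y : lin x y 1 = y.
Proof. unfold lin; destruct x, y; simpl; f_equal; ring. Qed.

Definition scal (c : R) (x : R2) : R2 := (c * fst x, c * snd x).

Lemma dist2_scal c x y : dist2 (scal c x) (scal c y) = Rabs c * dist2 x y.
Proof.
  unfold dist2, scal; simpl.
  rewrite <- sqrt_Rsqr_abs, <- sqrt_mult_alt by apply Rle_0_sqr. f_equal. unfold Rsqr; ring.
Qed.

Lemma scal_orig c : scal c orig = orig.
Proof. unfold scal, orig; simpl; f_equal; ring. Qed.

Lemma ball_open x d : open2 (fun y => dist2 x y < d).
Proof.
  intros y Hy. exists (d - dist2 x y). split; [lra|].
  intros z Hz. pose proof (dist2_tri x y z). lra.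
Qed.

Lemma lin_norm x y t R : unit01 t -> dist2 x orig <= R -> dist2 y orig <= R ->
  dist2 (lin x y t) orig <= R.
Proof.
  intros [H0 H1] Hx Hy.
  pose proof (dist2_tri (lin x y t) (scal t y) orig).
  assert (E1 : dist2 (lin x y t) (scal t y) = Rabs (1 - t) * dist2 x orig).
  { rewrite <- (scal_orig (1 - t)), <- dist2_scal. unfold dist2, lin, scal; simpl; f_equal; ring. }
  assert (E2 : dist2 (scal t y) orig = Rabs t * dist2 y orig).
  { rewrite <- dist2_scal, scal_orig; reflexivity. }
  rewrite Rabs_pos_eq in E1 by lra. rewrite Rabs_pos_eq in E2 by lra.
  pose proof (dist2_ge0 x orig). pose proof (dist2_ge0 y orig). nra.
Qed.

Lemma cont_comp (A B : R2 -> Prop) f g : cont_on A f -> cont_on B g ->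
  (forall x, A x -> B (f x)) -> cont_on A (fun x => g (f x)).
Proof.
  intros Hf Hg HAB x Ax eps He.
  destruct (Hg (f x) (HAB x Ax) eps He) as [d1 [Hd1 H1]].
  destruct (Hf x Ax d1 Hd1) as [d2 [Hd2 H2]].
  exists d2; split; auto.
Qed.

Lemma path_comp (A : R2 -> Prop) g f : path_cont g -> (forall t, unit01 t -> A (g t)) ->
  cont_on A f -> path_cont (fun t => f (g t)).
Proof.
  intros Hg HA Hf t Ht eps He.
  destruct (Hf (g t) (HA t Ht) eps He) as [d1 [Hd1 H1]].
  destruct (Hg t Ht d1 Hd1) as [d2 [Hd2 H2]].
  exists d2; split; auto.
Qed.

Lemma path_lin x y : path_cont (lin x y).
Proof.
  intros t Ht eps He. exists (eps / (dist2 x y + 1)).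
  pose proof (dist2_ge0 x y).
  split. apply Rdiv_lt_0_compat; lra.
  intros s Hs Hts. rewrite dist2_lin.
  assert (Rabs (t - s) * (dist2 x y + 1) < eps).
  { apply (Rmult_lt_compat_r (dist2 x y + 1)) in Hts; [|lra].
    unfold Rdiv in Hts. rewrite Rmult_assoc, Rinv_l in Hts by lra. lra. }
  pose proof (Rabs_pos (t - s)). nra.
Qed.

Definition clamp (t : R) : R := Rmax 0 (Rmin 1 t).

Lemma clamp_unit t : unit01 (clamp t).
Proof. unfold clamp, unit01, Rmax, Rmin; repeat destruct Rle_dec; lra. Qed.
Lemma clamp_id t : unit01 t -> clamp t = t.
Proof. unfold clamp, unit01, Rmax, Rmin; intros; repeat destruct Rle_dec; lra. Qed.
Lemma clamp_lip t s : Rabs (clamp t - clamp s) <= Rabs (t - s).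
Proof. unfold clamp, Rmax, Rmin; repeat destruct Rle_dec; unfold Rabs; repeat destruct Rcase_abs; lra. Qed.

Lemma path_bound g : path_cont g -> exists M, forall t, unit01 t -> dist2 (g t) orig <= M.
Proof.
  intros Hg.
  destruct (continuity_ab_maj (fun t => dist2 (g (clamp t)) orig) 0 1) as [Mx [H1 H2]].
  - lra.
  - intros c Hc. unfold continuity_pt, continue_in, limit1_in, limit_in. intros eps He.
    destruct (Hg (clamp c) (clamp_unit c) eps He) as [d [Hd H]].
    exists d; split; auto. intros x [_ Hx]. simpl in *. unfold Rdist in *.
    eapply Rle_lt_trans. apply dist2_diff. rewrite dist2_sym. apply H.
    apply clamp_unit. eapply Rle_lt_trans. apply clamp_lip. rewrite Rabs_minus_sym. exact Hx.
  - exists (dist2 (g (clamp Mx)) orig). intros t Ht. rewrite <- (clamp_id t Ht). apply H1. exact Ht.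
Qed.

Lemma lift_unique (phi : R2 -> R2) : local_homeo phi ->
  forall a b : R -> R2, path_cont a -> path_cont b ->
  (forall t, unit01 t -> phi (a t) = phi (b t)) -> a 0 = b 0 -> a 1 = b 1.
Proof.
  intros [_ Hloc] a b Ha Hb Hab H0.
  set (S := fun t => 0 <= t <= 1 /\ forall s, 0 <= s <= t -> a s = b s).
  assert (HS0 : S 0). { split; [lra|]. intros s Hs. replace s with 0 by lra. exact H0. }
  assert (Hbd : bound S). { exists 1. intros t [Ht _]. lra. }
  destruct (completeness S Hbd (ex_intro _ 0 HS0)) as [T [HTu HTl]].
  assert (T0 : 0 <= T) by (apply HTu; exact HS0).
  assert (T1 : T <= 1) by (apply HTl; intros t [Ht _]; lra).
  assert (HA : forall s, 0 <= s < T -> a s = b s).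
  { intros s Hs. destruct (classic (exists t, S t /\ s < t)) as [[t [[_ Ht] Hst]]|Hn].
    - apply Ht; lra.
    - exfalso. assert (T <= s); [|lra]. apply HTl. intros t Ht.
      destruct (Rle_dec t s); auto. exfalso; apply Hn; exists t; split; auto; lra. }
  assert (HB : a T = b T).
  { destruct (Req_dec T 0) as [E|NE]. { rewrite E; exact H0. }
    destruct (classic (a T = b T)) as [|Hne]; auto. exfalso.
    set (d := dist2 (a T) (b T)).
    assert (Hd : 0 < d). { destruct (dist2_ge0 (a T) (b T)); auto. exfalso; apply Hne, dist2_eq0; auto. }
    assert (HTu' : unit01 T) by (split; lra).
    destruct (Ha T HTu' (d/2)) as [d1 [Hd1 H1]]; [lra|].
    destruct (Hb T HTu' (d/2)) as [d2 [Hd2 H2]]; [lra|].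
    set (s := Rmax 0 (T - Rmin d1 d2 / 2)).
    assert (Hm : 0 < Rmin d1 d2) by (unfold Rmin; destruct Rle_dec; lra).
    assert (Hs : 0 <= s < T) by (unfold s, Rmax; destruct Rle_dec; lra).
    assert (Hs2 : Rabs (T - s) < Rmin d1 d2).
    { unfold s, Rmax; destruct Rle_dec; rewrite Rabs_pos_eq; lra. }
    assert (Hsu : unit01 s) by (split; lra).
    assert (Hm1 : Rmin d1 d2 <= d1) by apply Rmin_l.
    assert (Hm2 : Rmin d1 d2 <= d2) by apply Rmin_r.
    specialize (H1 s Hsu ltac:(lra)). specialize (H2 s Hsu ltac:(lra)).
    rewrite (HA s Hs) in H1.
    pose proof (dist2_tri (a T) (b s) (b T)). rewrite (dist2_sym (b s) (b T)) in H. fold d in H. lra. }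
  destruct (Req_dec T 1) as [E1|N1].
  { rewrite <- E1. exact HB. }
  exfalso.
  destruct (Hloc (a T)) as [V [W [g [HV [HoV [_ [HVg _]]]]]]].
  destruct (HoV (a T) HV) as [rho [Hrho Hball]].
  assert (HTu' : unit01 T) by (split; lra).
  destruct (Ha T HTu' rho Hrho) as [d1 [Hd1 H1]].
  destruct (Hb T HTu' rho Hrho) as [d2 [Hd2 H2]].
  set (dm := Rmin d1 d2).
  assert (Hm : 0 < dm) by (unfold dm, Rmin; destruct Rle_dec; lra).
  assert (Hm1 : dm <= d1) by apply Rmin_l.
  assert (Hm2 : dm <= d2) by apply Rmin_r.
  set (t' := Rmin 1 (T + dm / 2)).
  assert (St' : S t').
  { split. unfold t', Rmin; destruct Rle_dec; lra.
    intros s Hs. destruct (Rlt_dec s T) as [Hlt|Hge]. apply HA; lra.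
    assert (Hsu : unit01 s). { split; [lra|]. unfold t', Rmin in Hs; destruct Rle_dec in Hs; lra. }
    assert (Hts : Rabs (T - s) < dm).
    { rewrite Rabs_left1 by lra. unfold t', Rmin in Hs; destruct Rle_dec in Hs; lra. }
    assert (Va : V (a s)) by (apply Hball, H1; auto; lra).
    assert (Vb : V (b s)) by (apply Hball; rewrite HB; apply H2; auto; lra).
    destruct (HVg _ Va) as [_ Ea]. destruct (HVg _ Vb) as [_ Eb].
    rewrite <- Ea, <- Eb, (Hab s Hsu). reflexivity. }
  assert (t' <= T) by (apply HTu; exact St').
  unfold t', Rmin in H; destruct Rle_dec in H; lra.
Qed.

Lemma compact_bound (K : R2 -> Prop) j : compact2 K -> cont_on K j ->
  exists M, forall x, K x -> dist2 (j x) orig <= M.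
Proof.
  intros HK Hj.
  set (C := fun V : R2 -> Prop => exists x d, K x /\ 0 < d /\
     (forall y, K y -> dist2 x y < d -> dist2 (j x) (j y) < 1) /\
     (forall y, V y <-> dist2 x y < d)).
  destruct (HK C) as [l [Hl Hcov]].
  - intros V [x [d [_ [_ [_ HV]]]]] y Hy. apply HV in Hy.
    exists (d - dist2 x y). split; [lra|]. intros z Hz. apply HV.
    pose proof (dist2_tri x y z). lra.
  - intros x Kx. destruct (Hj x Kx 1 Rlt_0_1) as [d [Hd H]].
    exists (fun y => dist2 x y < d). split.
    + exists x, d. repeat split; auto.
    + rewrite dist2_refl; exact Hd.
  - assert (forall l, Forall C l -> exists M, forall y, K y -> Exists (fun V => V y) l ->
       dist2 (j y) orig <= M).
    { induction l0 as [|V l0 IH]; intros Hf.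
      - exists 0. intros y _ He. inversion He.
      - inversion Hf; subst. destruct (IH H2) as [M HM].
        destruct H1 as [x [d [Kx [Hd [Hx HV]]]]].
        exists (Rmax (dist2 (j x) orig + 1) M). intros y Ky He. inversion He; subst.
        + apply HV in H0. specialize (Hx y Ky H0).
          pose proof (dist2_tri (j y) (j x) orig). rewrite dist2_sym in Hx.
          eapply Rle_trans; [|apply Rmax_l]. lra.
        + eapply Rle_trans; [|apply Rmax_r]. auto. }
    destruct (H l Hl) as [M HM]. exists M. intros x Kx. apply HM; auto.
Qed.

Definition cball (R : R) (x : R2) : Prop := dist2 x orig <= R.

Lemma cball_cdisk R : 0 < R -> cdisk (cball R).
Proof.
  intros HR. split; [|split].
  - split. unfold cball; rewrite dist2_refl; lra.
    intros x y Hx Hy. exists (lin x y). split; [apply path_lin|].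
    split; [intros t Ht; apply lin_norm; auto | split; [apply lin0 | apply lin1]].
  - exists (scal R), (scal (/ R)). split; [|split; [|split]].
    + intros x Hx. unfold cball, closed_unit_disk in *. split.
      * rewrite <- (scal_orig R), dist2_scal, Rabs_pos_eq by lra. nra.
      * unfold scal; destruct x; simpl; f_equal; field; lra.
    + intros y Hy. unfold cball, closed_unit_disk in *. split.
      * rewrite <- (scal_orig (/ R)), dist2_scal, Rabs_pos_eq by (left; apply Rinv_0_lt_compat; lra).
        apply (Rmult_le_reg_l R); [lra|]. rewrite <- Rmult_assoc, Rinv_r by lra. lra.
      * unfold scal; destruct y; simpl; f_equal; field; lra.
    + intros x _ eps He. exists (eps / R). split. apply Rdiv_lt_0_compat; lra.
      intros y _ Hy. rewrite dist2_scal, Rabs_pos_eq by lra.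
      apply (Rmult_lt_compat_l R) in Hy; [|lra]. unfold Rdiv in Hy.
      rewrite (Rmult_comm eps), <- Rmult_assoc, Rinv_r, Rmult_1_l in Hy by lra. exact Hy.
    + intros x _ eps He. exists (eps * R). split. nra.
      intros y _ Hy. rewrite dist2_scal, Rabs_pos_eq by (left; apply Rinv_0_lt_compat; lra).
      apply (Rmult_lt_reg_l R); [lra|]. rewrite <- Rmult_assoc, Rinv_r by lra. lra.
  - exists R. split; auto. intros y Hy. unfold cball. rewrite dist2_sym. lra.
Qed.

Lemma openM_inter (A B : PS -> Prop) : openM A -> openM B -> openM (fun x => A x /\ B x).
Proof.
  intros HA HB x [Ax Bx].
  destruct (HA x Ax) as [la [H1 [H2 H3]]].
  destruct (HB x Bx) as [lb [H4 [H5 H6]]].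
  exists (la ++ lb). split; [apply Forall_app; auto|]. split; [apply Forall_app; auto|].
  intros y Hy. apply Forall_app in Hy. destruct Hy. auto.
Qed.

Lemma openM_True : openM (fun _ => True).
Proof. intros x _. exists nil. repeat split; auto. Qed.

Lemma openM_sub (A : PS -> Prop) : subbasisM A -> openM A.
Proof.
  intros HA x Ax. exists (A :: nil). repeat split; auto.
  intros y Hy. inversion Hy; auto.
Qed.

Lemma dev_lh (P : PS) : local_homeo (dev P).
Proof. exact (proj1 (proj2_sig P)). Qed.

Lemma rmin_lt a b c : c < Rmin a b -> c < a /\ c < b.
Proof. intros H. pose proof (Rmin_l a b). pose proof (Rmin_r a b). lra. Qed.

Lemma sub_case (Q : PS) (U : R2 -> Prop) : PC U -> open2 U ->
  forall iota : PS -> R2 -> R2,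
  (forall P, Iset Q U P -> immersion Q U P allQ (iota P)) ->
  forall V, subbasisE V -> forall P q, Iset Q U P -> U q -> V (P, iota P q) ->
  exists A : PS -> Prop, openM A /\ A P /\ exists r, 0 < r /\
    forall P' q', Iset Q U P' -> U q' -> A P' -> dist2 q q' < r -> V (P', iota P' q').
Proof.
  intros HPC Hopen iota Hiota V HV P q HIP HUq HVP.
  destruct HV as [[V0 [HV0 HVV]] | [P0 [K [U0 [HPK [HcK [HoU0 [HU0K HVE]]]]]]]].
  { exists V0. split; auto. split. apply HVV in HVP; exact HVP.
    exists 1. split; [lra|]. intros. apply HVV; simpl; auto. }
  apply HVE in HVP. destruct HVP as [j [[_ [Hjc [Hj0 Hjd]]] [u [Uu Eju]]]].
  simpl in Eju, Hjd.
  destruct (Hiota P HIP) as [_ [HiPc [HiP0 HiPd]]].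
  set (p := iota P q) in *.
  destruct (compact_bound K j HcK Hjc) as [M HM].
  destruct HPC as [HU0 HPCU]. destruct (HPCU orig q HU0 HUq) as [gam [Hgc [HgU [Hg0 Hg1]]]].
  pose proof (path_comp U gam (iota P) Hgc HgU HiPc) as Hpc.
  destruct (path_bound _ Hpc) as [M2 HM2].
  destruct (Hopen q HUq) as [rU [HrU HrUb]].
  destruct (proj2 (dev_lh P) p) as [Vp [Wp [gp [HVp [HoVp [_ [HVpg _]]]]]]].
  destruct (HoVp p HVp) as [rho [Hrho Hrhob]].
  destruct (HiPc q HUq (Rmin rho 1) (Rmin_pos _ _ Hrho Rlt_0_1)) as [da [Hda Hdab]].
  destruct (proj2 (dev_lh P0) u) as [Vu [Wu [hu [HVu [_ [HoWu [HVuh [HWuh Hhuc]]]]]]]].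
  destruct (HVuh u HVu) as [Wuw Ehu].
  destruct (HU0K u Uu) as [rK [HrK HrKb]].
  assert (Ku : K u) by (apply HrKb; rewrite dist2_refl; exact HrK).
  assert (Hw : dev P0 u = dev Q q).
  { rewrite <- (Hjd u Ku), Eju. apply HiPd; exact HUq. }
  destruct (HoWu _ Wuw) as [rw [Hrw Hrwb]].
  destruct (HoU0 u Uu) as [r0 [Hr0 Hr0b]].
  destruct (Hjc u Ku rho Hrho) as [dj [Hdj Hdjb]].
  set (eu := Rmin r0 (Rmin rK dj)).
  assert (Heu : 0 < eu) by (apply Rmin_pos; auto; apply Rmin_pos; auto).
  destruct (Hhuc _ Wuw eu Heu) as [dh [Hdh Hdhb]].
  destruct (proj1 (dev_lh Q) q I (Rmin dh rw) (Rmin_pos _ _ Hdh Hrw)) as [dQ [HdQ HdQb]].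
  set (r := Rmin rU (Rmin da dQ)).
  set (R := Rmax (Rmax M M2) (dist2 p orig + 1)).
  assert (HR1 : dist2 p orig + 1 <= R) by apply Rmax_r.
  assert (HRM : M <= R) by (eapply Rle_trans; [apply Rmax_l|apply Rmax_l]).
  assert (HRM2 : M2 <= R) by (eapply Rle_trans; [apply Rmax_r|apply Rmax_l]).
  assert (HR : 0 < R) by (pose proof (dist2_ge0 p orig); lra).
  exists (fun P' => immerses P (cball R) P'). split; [|split].
  { apply openM_sub. left. exists P, (cball R). split; [apply cball_cdisk; exact HR|].
    intros; tauto. }
  { exists (fun x => x). split; [intros; exact I|]. split; [|split; auto].
    intros x _ eps He. exists eps; split; auto. }
  exists r. split. { apply Rmin_pos; auto. apply Rmin_pos; auto. }
  intros P' q' HIP' HUq' [k [_ [Hkc [Hk0 Hkd]]]] Hqq'.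
  apply HVE. destruct (Hiota P' HIP') as [_ [Hi'c [Hi'0 Hi'd]]].
  destruct (rmin_lt _ _ _ Hqq') as [HqU Hq2]. destruct (rmin_lt _ _ _ Hq2) as [Hqa HqQ].
  set (z := dev Q q').
  destruct (rmin_lt _ _ _ (HdQb q' I HqQ)) as [Hz1 Hz2].
  rewrite <- Hw in Hz1, Hz2. fold z in Hz1, Hz2.
  assert (Wuz : Wu z) by (apply Hrwb; exact Hz2).
  pose proof (Hdhb z Wuz Hz1) as Hu'. rewrite Ehu in Hu'.
  set (u' := hu z) in *.
  destruct (rmin_lt _ _ _ Hu') as [Hu'0 Hu'1]. destruct (rmin_lt _ _ _ Hu'1) as [Hu'K Hu'j].
  assert (U0u' : U0 u') by (apply Hr0b; exact Hu'0).
  assert (Ku' : K u') by (apply HrKb; exact Hu'K).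
  assert (Vpj : Vp (j u')) by (apply Hrhob; rewrite <- Eju; apply Hdjb; auto).
  destruct (HWuh z Wuz) as [_ Ez].
  assert (Eq1 : j u' = gp z).
  { destruct (HVpg _ Vpj) as [_ E]. rewrite <- E, (Hjd u' Ku'). unfold u'. rewrite Ez. reflexivity. }
  assert (Eq2 : iota P q' = gp z).
  { destruct (rmin_lt _ _ _ (Hdab q' HUq' Hqa)) as [H1 _].
    destruct (HVpg _ (Hrhob _ H1)) as [_ E]. rewrite <- E, (HiPd q' HUq'). reflexivity. }
  assert (Lift1 : k (iota P q) = iota P' q).
  { assert (HH := lift_unique (dev P') (dev_lh P') (fun t => k (iota P (gam t)))
                  (fun t => iota P' (gam t))).
    simpl in HH. rewrite Hg1 in HH. apply HH.
    - apply (path_comp (cball R) (fun t => iota P (gam t)) k Hpc); auto.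
      intros t Ht. unfold cball. specialize (HM2 t Ht). lra.
    - apply (path_comp U gam (iota P') Hgc HgU Hi'c).
    - intros t Ht. rewrite Hkd, HiPd, Hi'd; auto. unfold cball. specialize (HM2 t Ht). lra.
    - rewrite Hg0, HiP0, Hk0, Hi'0. reflexivity. }
  assert (Hseg : forall t, unit01 t -> dist2 q (lin q q' t) <= dist2 q q').
  { intros t [Ht0 Ht1]. rewrite <- (lin0 q q') at 1. rewrite dist2_lin.
    rewrite Rabs_left1 by lra. pose proof (dist2_ge0 q q'). nra. }
  assert (HsU : forall t, unit01 t -> U (lin q q' t)).
  { intros t Ht. apply HrUb. specialize (Hseg t Ht). lra. }
  assert (HsB : forall t, unit01 t -> cball R (iota P (lin q q' t))).
  { intros t Ht. unfold cball.
    assert (dist2 q (lin q q' t) < da) by (specialize (Hseg t Ht); lra).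
    destruct (rmin_lt _ _ _ (Hdab _ (HsU t Ht) H)) as [_ H2].
    pose proof (dist2_tri (iota P (lin q q' t)) p orig). rewrite dist2_sym in H2. fold p in H2. lra. }
  assert (Lift2 : k (iota P q') = iota P' q').
  { assert (HH := lift_unique (dev P') (dev_lh P') (fun t => k (iota P (lin q q' t)))
                  (fun t => iota P' (lin q q' t))).
    simpl in HH. rewrite lin1, lin0 in HH. apply HH.
    - apply (path_comp (cball R) (fun t => iota P (lin q q' t)) k); auto.
      apply (path_comp U); auto. apply path_lin.
    - apply (path_comp U); auto. apply path_lin.
    - intros t Ht. rewrite Hkd, HiPd, Hi'd; auto.
    - exact Lift1. }
  exists (fun x => k (j x)). split.
  - split; [intros; exact I|]. split; [|split].
    + apply (cont_comp K (cball R)); auto. intros x Kx. unfold cball. specialize (HM x Kx). lra.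
    + rewrite Hj0, Hk0. reflexivity.
    + intros x Kx. simpl. rewrite Hkd. apply Hjd; auto. unfold cball. specialize (HM x Kx). lra.
  - exists u'. split; auto. simpl. rewrite Eq1, <- Eq2. exact Lift2.
Qed.

Theorem mainTheorem8 :
  forall (Q : PS) (U : R2 -> Prop),
    PC U -> open2 U ->
    forall iota : PS -> R2 -> R2,
      (forall P, Iset Q U P -> immersion Q U P allQ (iota P)) ->
      (* continuity of I_U : I(U) x U -> E, (P,q) |-> (P, iota_P q) *)
      forall W : PS * R2 -> Prop, openE W ->
      forall (P : PS) (q : R2), Iset Q U P -> U q -> W (P, iota P q) ->
        exists A : PS -> Prop, openM A /\ A P /\
          exists r, 0 < r /\
            forall (P' : PS) (q' : R2), Iset Q U P' -> U q' -> A P' ->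
              dist2 q q' < r -> W (P', iota P' q').
Proof.
  intros Q U HPC Hopen iota Hiota W HW P q HIP HUq HWP.
  destruct (HW _ HWP) as [l [Hl1 [Hl2 Hl3]]].
  assert (Gen : forall l : list (PS * R2 -> Prop), Forall subbasisE l ->
    Forall (fun V => V (P, iota P q)) l ->
    exists A : PS -> Prop, openM A /\ A P /\ exists r, 0 < r /\
      forall P' q', Iset Q U P' -> U q' -> A P' -> dist2 q q' < r ->
        Forall (fun V => V (P', iota P' q')) l).
  { induction l0 as [|V l0 IH]; intros H1 H2.
    - exists (fun _ => True). split; [apply openM_True|]. split; [exact I|].
      exists 1. split; [lra|]. intros. constructor.
    - inversion H1; subst. inversion H2; subst.
      destruct (IH H4 H6) as [A1 [HA1 [A1P [r1 [Hr1 H1r]]]]].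
      destruct (sub_case Q U HPC Hopen iota Hiota V H3 P q HIP HUq H5)
        as [A2 [HA2 [A2P [r2 [Hr2 H2r]]]]].
      exists (fun x => A1 x /\ A2 x). split; [apply openM_inter; auto|]. split; [auto|].
      exists (Rmin r1 r2). split; [apply Rmin_pos; auto|].
      intros P' q' H' Hq' [HA1' HA2'] Hd. destruct (rmin_lt _ _ _ Hd).
      constructor; auto. }
  destruct (Gen l Hl1 Hl2) as [A [HA [AP [r [Hr Hrr]]]]].
  exists A. split; [exact HA|]. split; [exact AP|]. exists r. split; [exact Hr|].
  intros. apply Hl3. apply Hrr; auto.
Qed.
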